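(* Let $\tilde r\in(\tfrac14,\tfrac12)$ and let $\rho$ be an RSR-representation of the four-punctured sphere whose local monodromies $M_j$ are conjugate to $\mathrm{diag}(e^{2\pi i\tilde r},e^{-2\pi i\tilde r})$, with trace coordinates $(\tilde x,\tilde y,\tilde z)=(\mathrm{Tr}(M_2M_1),\mathrm{Tr}(M_3M_2),\mathrm{Tr}(M_3M_1))$. Then, with $r=2\tilde r-\tfrac12$, there is a real representation (i.e. a real point of the character variety, conjugate to an $\mathrm{SL}(2,\mathbb{R})$-representation) in $\mathcal M^r_{1,1}$ whose trace coordinates $(x,y,z)$ satisfy $\tilde x=2-x^2$, $\tilde y=2-y^2$, $\tilde z=2-z^2$.
   Context: Four-punctured sphere $S_4=\mathbb{C}P^1\setminus\{p_1,\dots,p_4\}$ with generators $\gamma_{p_j}$ of $\pi_1(S_4,s_0)$ (simple anticlockwise loops around $p_j$) satisfying $\gamma_{p_4}\gamma_{p_3}\gamma_{p_2}\gamma_{p_1}=1$, $M_j=\rho(\gamma_{p_j})$. An irreducible representation $\rho\colon\pi_1(S_4,s_0)\to\mathrm{SL}(2,\mathbb{C})$ is RSR if: it takes values in $\mathrm{SL}(2,\mathbb{R})$ with $\mathrm{Tr}(M_1M_2),\mathrm{Tr}(M_2M_3),\mathrm{Tr}(M_1M_3)<-2$; all $M_j$ lie in the conjugacy class of $\mathrm{diag}(e^{2\pi i\tilde r},e^{-2\pi i\tilde r})$ with $\tilde r\in(\tfrac14,\tfrac12)$; and $\mathrm{tr}(M_1M_3)=\mathrm{tr}(M_2M_4)$.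 $\mathcal M^r_{1,1}$ is the space of conjugacy classes of representations $\langle\gamma_x,\gamma_y\rangle=\pi_1(T^2\setminus\{o\})\to\mathrm{SL}(2,\mathbb{C})$ such that the commutator $\gamma_y^{-1}\gamma_x^{-1}\gamma_y\gamma_x$ (a loop around the puncture) is mapped into the conjugacy class of $\mathrm{diag}(e^{-2\pi ir},e^{2\pi ir})$; trace coordinates $x=\mathrm{Tr}X$, $y=\mathrm{Tr}Y$, $z=\mathrm{Tr}(YX)$ with $X,Y$ the images of $\gamma_x,\gamma_y$; they satisfy $x^2+y^2+z^2-xyz-2-2\cos(2\pi r)=0$. *)

(* Defs.v *)
From HB Require Import structures.
From mathcomp Require Import all_boot all_order all_algebra.
From mathcomp Require Import all_classical all_reals.
From mathcomp Require Import trigo.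
From mathcomp Require Import complex.
Set Implicit Arguments. Unset Strict Implicit. Unset Printing Implicit Defensive.
Import Order.TTheory GRing.Theory Num.Theory.
Local Open Scope ring_scope.

Section Defs.
Variable R : realType.

Definition expi (t : R) : R[i] := Complex (cos t) (sin t).

Definition toC (A : 'M[R]_2) : 'M[R[i]]_2 := map_mx (fun a => Complex a 0) A.

Definition diag2 (a b : R[i]) : 'M[R[i]]_2 :=
  \matrix_(i < 2, j < 2) (if i == j then (if i == 0 then a else b) else 0).

Definition conj_to (A D : 'M[R[i]]_2) : Prop :=
  exists P : 'M[R[i]]_2, P \in unitmx /\ invmx P *m A *m P = D.

Definition in_class (A : 'M[R[i]]_2) (t : R) : Prop :=
  conj_to A (diag2 (expi t) (expi (- t))).

(* The representation generated by M1..M4 (acting on C^2) is irreducible: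
   no common invariant complex line, i.e. no common eigenvector. *)
Definition irreducible4 (M1 M2 M3 M4 : 'M[R]_2) : Prop :=
  ~ exists v : 'cV[R[i]]_2, v != 0 /\
      (forall M, M \in [:: M1; M2; M3; M4] ->
         exists lam : R[i], toC M *m v = lam *: v).

(* RSR representation of pi_1(S_4) given by M_j = rho(gamma_{p_j}),
   with gamma_4 gamma_3 gamma_2 gamma_1 = 1. *)
Definition RSR (rt : R) (M1 M2 M3 M4 : 'M[R]_2) : Prop :=
  [/\ [/\ \det M1 = 1, \det M2 = 1, \det M3 = 1 & \det M4 = 1],
      M4 *m M3 *m M2 *m M1 = 1%:M /\ irreducible4 M1 M2 M3 M4,
      [/\ 1/4 < rt, rt < 1/2,
          \tr (M1 *m M2) < -2, \tr (M2 *m M3) < -2 & \tr (M1 *m M3) < -2],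
      [/\ in_class (toC M1) (2 * pi * rt), in_class (toC M2) (2 * pi * rt),
          in_class (toC M3) (2 * pi * rt) & in_class (toC M4) (2 * pi * rt)]
    & \tr (M1 *m M3) = \tr (M2 *m M4)].

End Defs.

(* Main.v *)
Require Import Defs.
From HB Require Import structures.
From mathcomp Require Import all_boot all_order all_algebra.
From mathcomp Require Import all_classical all_reals.
From mathcomp Require Import trigo.
From mathcomp Require Import complex.
From mathcomp Require Import ring lra.
Import Order.TTheory GRing.Theory Num.Theory.
Local Open Scope ring_scope.

Lemma det2 (R : comRingType) (A : 'M[R]_2) : \det A = A 0 0 * A 1 1 - A 0 1 * A 1 0.
Proof.
rewrite (expand_det_row _ 0) !big_ord_recl big_ord0 /cofactor !det_mx11 !mxE /=.
rewrite addr0.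
have h1 : lift (0:'I_2) (0:'I_1) = 1 by apply/val_inj.
have h2 : lift (ord0:'I_2) (0:'I_1) = 1 by apply/val_inj.
have h3 : lift (lift (ord0:'I_2) (ord0:'I_1)) (0:'I_1) = 0 by apply/val_inj.
have h4 : lift (ord0:'I_2) (ord0:'I_1) = 1 by apply/val_inj.
have h5 : lift (1:'I_2) (0:'I_1) = 0 by apply/val_inj.
rewrite ?h1 ?h2 ?h3 ?h4 h5 /=. rewrite expr0 expr1 !mul1r mulN1r mulrN. done.
Qed.
Lemma tr2 (R : comRingType) (A : 'M[R]_2) : \tr A = A 0 0 + A 1 1.
Proof. rewrite /mxtrace !big_ord_recl big_ord0 addr0.
by have -> : lift (ord0:'I_2) (ord0:'I_1) = 1 by apply/val_inj. Qed.
Lemma mul2 (R : comRingType) (A B : 'M[R]_2) i j : (A *m B) i j = A i 0 * B 0 j + A i 1 * B 1 j.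
Proof. rewrite mxE !big_ord_recl big_ord0 addr0.
by have -> : lift (ord0:'I_2) (ord0:'I_1) = 1 by apply/val_inj. Qed.

Section Aux.
Variable R : realType.

Definition mk2 (a b c d : R) : 'M[R]_2 :=
  \matrix_(i < 2, j < 2) if i == 0 then (if j == 0 then a else b) else (if j == 0 then c else d).
Lemma mk2_00 a b c d : mk2 a b c d 0 0 = a. Proof. by rewrite mxE. Qed.
Lemma mk2_01 a b c d : mk2 a b c d 0 1 = b. Proof. by rewrite mxE. Qed.
Lemma mk2_10 a b c d : mk2 a b c d 1 0 = c. Proof. by rewrite mxE. Qed.
Lemma mk2_11 a b c d : mk2 a b c d 1 1 = d. Proof. by rewrite mxE. Qed.

Lemma ord2_cases (i : 'I_2) : i = 0 \/ i = 1.
Proof. case: i => [[|[|m]]] Hi; [left|right|by []]; exact/val_inj. Qed.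

Lemma mx2_eq (F : Type) (A B : 'M[F]_2) :
  A 0 0 = B 0 0 -> A 0 1 = B 0 1 -> A 1 0 = B 1 0 -> A 1 1 = B 1 1 -> A = B.
Proof.
move=> h00 h01 h10 h11; apply/matrixP => i j.
by case: (ord2_cases i) => ->; case: (ord2_cases j) => ->.
Qed.

Lemma inv2 (A : 'M[R]_2) : \det A = 1 ->
  invmx A = mk2 (A 1 1) (- A 0 1) (- A 1 0) (A 0 0).
Proof.
move=> hd.
have hu : A \in unitmx by rewrite unitmxE hd unitr1.
have hm : A *m mk2 (A 1 1) (- A 0 1) (- A 1 0) (A 0 0) = 1%:M.
  move: hd; rewrite det2 => hd.
  apply: mx2_eq; rewrite mul2 !mxE /=; rewrite -?hd; ring.
by rewrite -[RHS]mul1mx -(mulVmx hu) -mulmxA hm mulmx1.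
Qed.

End Aux.
Section C.
Variable R : realType.

Lemma key (t : R) : (expi t) ^+ 2 - (2 * cos t) %:C%C * expi t + 1 = 0.
Proof.
rewrite /expi. apply/eqP; rewrite eq_complex. simpc. rewrite /=.
have h := cos2Dsin2 t.
apply/andP; split; apply/eqP; nra.
Qed.

Lemma aux (F : comNzRingType) (a b c d T l : F) :
  a*d - b*c = 1 -> a + d = T -> l^+2 - T * l + 1 = 0 -> c*b + d*(l - a) = (l - a) * l.
Proof.
move=> h1 h2 h3. apply/eqP; rewrite -subr_eq0; apply/eqP.
have -> : c*b + d*(l-a) - (l-a) * l = (1 - (a*d-b*c)) - (l^+2 - T * l+1) + l * (a+d-T) by ring.
by rewrite h1 h2 h3 !subrr mulr0; ring.
Qed.

Arguments aux {F a b c d T l}.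
Lemma class_of (K : 'M[R]_2) (phi : R) :
  \det K = 1 -> \tr K = 2 * cos phi -> sin phi != 0 -> in_class (toC K) phi.
Proof.
rewrite det2 tr2 => hd ht hs.
set a := K 0 0 in hd ht *; set b := K 0 1 in hd ht *;
set c := K 1 0 in hd ht *; set d := K 1 1 in hd ht *.
have hb : b != 0.
  apply/negP => /eqP hb0. rewrite hb0 in hd.
  have h := cos2Dsin2 phi. have h2 : 0 < sin phi ^+ 2 by rewrite exprn_even_gt0 // hs orbT.
  have := sqr_ge0 (a - d). nra.
pose P : 'M[R[i]]_2 := \matrix_(i < 2, j < 2)
  if i == 0 then b%:C%C else (if j == 0 then expi phi - a%:C%C else expi (- phi) - a%:C%C).
have P00 : P 0 0 = b%:C%C by rewrite mxE.
have P01 : P 0 1 = b%:C%C by rewrite mxE.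
have P10 : P 1 0 = expi phi - a%:C%C by rewrite mxE.
have P11 : P 1 1 = expi (- phi) - a%:C%C by rewrite mxE.
have hu : P \in unitmx.
  rewrite unitmxE unitfE det2 P00 P01 P10 P11.
  have -> : b%:C%C * (expi (- phi) - a%:C%C) - b%:C%C * (expi phi - a%:C%C) =
            b%:C%C * (expi (- phi) - expi phi) by ring.
  rewrite mulf_neq0 //.
    by rewrite eq_complex /= (negbTE hb).
  rewrite /expi sinN cosN eq_complex; simpc; rewrite /=.
  by apply: contra hs => /eqP h; apply/eqP; lra.
have E : toC K *m P = P *m diag2 (expi phi) (expi (- phi)).
  have kC : forall i j, toC K i j = (K i j)%:C%C by move=> i j; rewrite mxE.
  have dC : (a%:C * d%:C - b%:C * c%:C = 1)%C by rewrite -!rmorphM -rmorphB hd.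
  have tC : (a%:C + d%:C = (2 * cos phi)%:C)%C by rewrite -rmorphD ht.
  have D00 : diag2 (expi phi) (expi (- phi)) 0 0 = expi phi by rewrite mxE.
  have D01 : diag2 (expi phi) (expi (- phi)) 0 1 = 0 by rewrite mxE.
  have D10 : diag2 (expi phi) (expi (- phi)) 1 0 = 0 by rewrite mxE.
  have D11 : diag2 (expi phi) (expi (- phi)) 1 1 = expi (- phi) by rewrite mxE.
  apply: mx2_eq; rewrite !mul2 !kC ?P00 ?P01 ?P10 ?P11 ?D00 ?D01 ?D10 ?D11 -/a -/b -/c -/d.
  - ring.
  - ring.
  - rewrite mulr0 addr0; exact: (aux dC tC (key phi)).
  - rewrite mulr0 add0r; apply: (aux dC tC); rewrite -(cosN phi); exact: key.
exists P; split => //.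
by rewrite -mulmxA E mulmxA mulVmx // mul1mx.
Qed.


Lemma tr_class (M : 'M[R]_2) (t : R) : in_class (toC M) t -> \tr M = 2 * cos t.
Proof.
move=> [P [hu hE]].
have : \tr (toC M) = \tr (diag2 (expi t) (expi (- t))).
  by rewrite -hE mxtrace_mulC mulmxA mulmxV // mul1mx.
rewrite !tr2 !mxE /= => /(congr1 (@complex.Re R)) /=.
rewrite /expi /= cosN => ->; ring.
Qed.

Lemma trinv (A B : 'M[R]_2) : B *m A = 1%:M -> \det A = 1 -> \tr B = \tr A.
Proof.
move=> hm; rewrite det2 => hd.
have e00 := congr1 (fun M : 'M[R]_2 => M 0 0) hm; have e01 := congr1 (fun M : 'M[R]_2 => M 0 1) hm.
have e10 := congr1 (fun M : 'M[R]_2 => M 1 0) hm; have e11 := congr1 (fun M : 'M[R]_2 => M 1 1) hm.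
move: e00 e01 e10 e11; rewrite !mul2 !mxE /= => e00 e01 e10 e11.
rewrite !tr2.
have -> : B 0 0 + B 1 1 = B 0 0 * (A 0 0 * A 1 1 - A 0 1 * A 1 0) + B 1 1 * (A 0 0 * A 1 1 - A 0 1 * A 1 0) by rewrite hd !mulr1.
have -> : B 0 0 * (A 0 0 * A 1 1 - A 0 1 * A 1 0) + B 1 1 * (A 0 0 * A 1 1 - A 0 1 * A 1 0) =
  (B 0 0 * A 0 0 + B 0 1 * A 1 0) * A 1 1 - (B 0 0 * A 0 1 + B 0 1 * A 1 1) * A 1 0
  + (B 1 0 * A 0 1 + B 1 1 * A 1 1) * A 0 0 - (B 1 0 * A 0 0 + B 1 1 * A 1 0) * A 0 1 by ring.
rewrite e00 e01 e10 e11. ring.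
Qed.
End C.
Lemma fricke_poly (R : comNzRingType) (a0 a1 a2 a3 b0 b1 b2 b3 c0 c1 c2 c3 : R) :
  let dA := a0*a3 - a1*a2 in let dB := b0*b3 - b1*b2 in let dC := c0*c3-c1*c2 in
  let a := a0 + a3 in let b := b0 + b3 in let c := c0 + c3 in
  let x := b0*a0 + b1*a2 + (b2*a1 + b3*a3) in
  let y := c0*b0 + c1*b2 + (c2*b1 + c3*b3) in
  let z := c0*a0 + c1*a2 + (c2*a1 + c3*a3) in
  let d := (c0*b0 + c1*b2)*a0 + (c0*b1+c1*b3)*a2 + ((c2*b0+c3*b2)*a1 + (c2*b1+c3*b3)*a3) in
  x^+2 + y^+2 + z^+2 + x*y*z - ((a*b+c*d)*x + (b*c+a*d)*y + (a*c+b*d)*z) - 4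
   + (a^+2 + b^+2 + c^+2 + d^+2 + a*b*c*d) =
  (2%:R - c3^+2 - c0^+2 - b3^+2 + b3^+2*c0*c3 - b2*b3*c1*c3 + b2*b3*c0*c1 - b2^+2*c1^+2 - b1*b3*c2*c3 + b1*b3*c0*c2 - b1^+2*c2^+2 + b0*b3*c3^+2 - 2%:R*b0*b3*c0*c3 + b0*b3*c0^+2 + b0*b2*c1*c3 - b0*b2*c0*c1 + b0*b1*c2*c3 - b0*b1*c0*c2 - b0^+2 + b0^+2*c0*c3) * (dA - 1) + (2%:R - 2%:R*c0*c3 - a3^+2 + a3^+2*c0*c3 - a2*a3*c1*c3 + a2*a3*c0*c1 - a2^+2*c1^+2 - a1*a3*c2*c3 + a1*a3*c0*c2 + a1*a2*c3^+2 - 2%:R*a1*a2*c0*c3 + a1*a2*c0^+2 - a1^+2*c2^+2 + a0*a2*c1*c3 - a0*a2*c0*c1 + a0*a1*c2*c3 - a0*a1*c0*c2 - a0^+2 + a0^+2*c0*c3) * (dB - 1) + (- 2%:R*b1*b2 + a3^+2*b1*b2 - a2*a3*b1*b3 + a2*a3*b0*b1 - a2^+2*b1^+2 - a1*a3*b2*b3 + a1*a3*b0*b2 - 2%:R*a1*a2 + a1*a2*b3^+2 - 2%:R*a1*a2*b1*b2 + a1*a2*b0^+2 - a1^+2*b2^+2 + a0*a2*b1*b3 - a0*a2*b0*b1 + a0*a1*b2*b3 - a0*a1*b0*b2 + a0^+2*b1*b2) * (dC - 1).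
Proof. move=> dA dB dC a b c x y z d. rewrite /dA /dB /dC /a /b /c /x /y /z /d. ring. Qed.

Lemma fricke (R : realType) (A B C : 'M[R]_2) : \det A = 1 -> \det B = 1 -> \det C = 1 ->
  let x := \tr (B *m A) in let y := \tr (C *m B) in let z := \tr (C *m A) in
  let a := \tr A in let b := \tr B in let c := \tr C in let d := \tr (C *m B *m A) in
  x^+2 + y^+2 + z^+2 + x*y*z - ((a*b+c*d)*x + (b*c+a*d)*y + (a*c+b*d)*z) - 4
   + (a^+2 + b^+2 + c^+2 + d^+2 + a*b*c*d) = 0.
Proof.
rewrite !det2 => hA hB hC.
have := @fricke_poly _ (A 0 0) (A 0 1) (A 1 0) (A 1 1) (B 0 0) (B 0 1) (B 1 0) (B 1 1)
   (C 0 0) (C 0 1) (C 1 0) (C 1 1).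
cbv zeta. rewrite hA hB hC !subrr !mulr0 !addr0 => <-.
by rewrite /= !tr2 !mul2.
Qed.
Arguments tr_class {R M t}.
Arguments trinv {R A B}.
Arguments class_of {R K phi}.
Arguments fricke {R A B C}.
Arguments mk2_00 {R}. Arguments mk2_01 {R}. Arguments mk2_10 {R}. Arguments mk2_11 {R}.
Arguments inv2 {R A}.
Arguments mk2 {R}.

Theorem corollary3p12 (R : realType) (rt : R) (M1 M2 M3 M4 : 'M[R]_2) :
  1/4 < rt -> rt < 1/2 ->
  RSR rt M1 M2 M3 M4 ->
  let xt := \tr (M2 *m M1) in
  let yt := \tr (M3 *m M2) in
  let zt := \tr (M3 *m M1) in
  let r := 2 * rt - 1/2 in
  exists X Y : 'M[R]_2,
    [/\ \det X = 1 /\ \det Y = 1,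
        in_class (toC (invmx Y *m invmx X *m Y *m X)) (- (2 * pi * r)),
        xt = 2 - (\tr X) ^+ 2,
        yt = 2 - (\tr Y) ^+ 2
      & zt = 2 - (\tr (Y *m X)) ^+ 2].
Proof.
move=> h14 h12 [[d1 d2 d3 d4] [hprod _] [_ _ t12 t23 t13] [c1 c2 c3 c4] _] xt yt zt r.
set t := 2 * cos (2 * pi * rt).
have ta := tr_class c1; have tb := tr_class c2; have tc := tr_class c3; have td := tr_class c4.
have hd4 : \tr M4 = \tr (M3 *m M2 *m M1).
  apply: trinv; first by rewrite !mulmxA.
  by rewrite !det_mulmx d1 d2 d3 !mul1r.
have Fr := fricke d1 d2 d3. cbv zeta in Fr.
rewrite -hd4 ta tb tc td -/xt -/yt -/zt in Fr.
have hx : 4 < 2 - xt by rewrite /xt mxtrace_mulC; lra.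
have hy : 4 < 2 - yt by rewrite /yt mxtrace_mulC; lra.
have hz : 4 < 2 - zt by rewrite /zt mxtrace_mulC; lra.
set x := Num.sqrt (2 - xt); set y := Num.sqrt (2 - yt); set z := Num.sqrt (2 - zt).
have x2 : x ^+ 2 = 2 - xt by rewrite sqr_sqrtr //; lra.
have y2 : y ^+ 2 = 2 - yt by rewrite sqr_sqrtr //; lra.
have z2 : z ^+ 2 = 2 - zt by rewrite sqr_sqrtr //; lra.
have x0 : 0 <= x by exact: sqrtr_ge0.
have y0 : 0 <= y by exact: sqrtr_ge0.
have z0 : 0 <= z by exact: sqrtr_ge0.
have xg : 2 < x by nra.
have yg : 2 < y by nra.
have zg : 2 < z by nra.
set w := Num.sqrt (z ^+ 2 - 4).
have w2 : w ^+ 2 = z ^+ 2 - 4 by rewrite sqr_sqrtr //; nra.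
have w0 : 0 <= w by exact: sqrtr_ge0.
set s := (z + w) / 2. set u := z - s.
have su : s * u = 1 by rewrite /u /s; nra.
pose X := mk2 x (-1) 1 0.
pose Y := mk2 0 s (- u) y.
have dX : \det X = 1 by rewrite det2 /X !(mk2_00, mk2_01, mk2_10, mk2_11); ring.
have dY : \det Y = 1 by rewrite det2 /Y !(mk2_00, mk2_01, mk2_10, mk2_11); rewrite -su; ring.
exists X, Y; split => //.
- set c := 2 * cos (2 * pi * rt) in Fr.
  have hpi := pi_gt0 R.
  have hr0 : 0 < 2 * pi * r by rewrite /r; nra.
  have hr1 : 2 * pi * r < pi by rewrite /r; nra.
  apply: class_of.
  + by rewrite !det_mulmx !det_inv dX dY invr1 !mul1r.
  + rewrite (inv2 dX) (inv2 dY) tr2 !mul2 /X /Y !(mk2_00, mk2_01, mk2_10, mk2_11).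
    have hsu : s + u = z by rewrite /u; ring.
    set p := x * y * z. set q := 2 - (xt + yt + zt) + c ^+ 2.
    have pq2 : p ^+ 2 = q ^+ 2.
      rewrite /p !exprMn x2 y2 z2 /q.
      apply/eqP; rewrite -subr_eq0 -oppr_eq0; apply/eqP; rewrite -[X in _ = X]Fr; ring.
    have hq : 0 < q by rewrite /q; have := sqr_ge0 c; lra.
    have hp : 0 <= p by rewrite /p !mulr_ge0.
    have pq : p = q by apply/eqP; rewrite -(@eqrXn2 _ 2%N p q) // ?pq2 // ltW.
    have trig : 2 * cos (- (2 * pi * r)) = 2 - c ^+ 2.
      rewrite cosN.
      have -> : 2 * pi * r = (2 * pi * rt) + (2 * pi * rt) - pi by rewrite /r; field.
      rewrite cosB cosD cospi sinpi /c.
      have h := cos2Dsin2 (2 * pi * rt). nra.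
    rewrite trig.
    transitivity (x^+2 + y^+2 + (s+u)^+2 - x*y*(s+u) - 2 + (x^+2-2)*(s*u-1)); first by ring.
    rewrite su subrr mulr0 addr0 hsu -/p pq /q x2 y2 z2. ring.
  + rewrite sinN oppr_eq0 gt_eqF //. apply: sin_gt0_pi. by rewrite hr0 hr1.
- by rewrite tr2 /X mk2_00 mk2_11 addr0 x2; ring.
- by rewrite tr2 /Y mk2_00 mk2_11 add0r y2; ring.
- rewrite tr2 !mul2 /X /Y !(mk2_00, mk2_01, mk2_10, mk2_11).
  have -> : 0 * x + s * 1 + (- u * -1 + y * 0) = z by rewrite /u; ring.
  by rewrite z2; ring.
Qed.
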